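(* Let $M$ be a matroid, let $S,T$ be disjoint subsets of $E(M)$, let $k:=\kappa_M(S,T)$, and let $e\in E(M)-(S\cup T)$ be such that $\kappa_{M/e}(S,T)\neq k$. If $(A,B)$ is a partition of $E(M)$ with $S\subseteq A$, $T\subseteq B$, $\lambda_M(A)=k$, $e\in A$, and $|A|$ minimum among all such partitions, then $e\in\mathrm{cl}_M(A-e)\cap\mathrm{cl}_M(B)$.
   Context: For a matroid $M$ with ground set $E$, $\lambda_M(X):=r_M(X)+r_M(E-X)-r(M)$, and for disjoint $S,T\subseteq E$, $\kappa_M(S,T):=\min\{\lambda_M(X):S\subseteq X\subseteq E-T\}$. $\mathrm{cl}_M$ denotes closure. *)

(* Defs.v *)
From mathcomp Require Import all_boot.
Set Implicit Arguments. Unset Strict Implicit. Unset Printing Implicit Defensive.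

(* A matroid on the finite ground set E = [set: T], given by its rank function. *)
Record matroid (T : finType) := Matroid {
  rk : {set T} -> nat;
  rk_card : forall X, rk X <= #|X|;
  rk_mono : forall X Y : {set T}, X \subset Y -> rk X <= rk Y;
  rk_submod : forall X Y : {set T}, rk (X :|: Y) + rk (X :&: Y) <= rk X + rk Y
}.

Section Conn.
Variable T : finType.

(* connectivity of X relative to ground set E with rank function r:
   r(X) + r(E - X) - r(E)  (never truncated for a matroid, by submodularity) *)
Definition lam_on (E : {set T}) (r : {set T} -> nat) (X : {set T}) : nat :=
  r X + r (E :\: X) - r E.

(* The default value r E of the
   fold is never attained below a candidate since lam X <= r E, and X = S is a
   candidate whenever S, T are disjoint subsets of E. *)
Definition kappa_on (E : {set T}) (r : {set T} -> nat) (S U : {set T}) : nat :=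
  \big[minn/r E]_(X : {set T} | (S \subset X) && (X \subset E :\: U)) lam_on E r X.

Definition lambda (M : matroid T) (X : {set T}) := lam_on [set: T] (rk M) X.
Definition kappa (M : matroid T) (S U : {set T}) := kappa_on [set: T] (rk M) S U.

Definition contr_rk (M : matroid T) (e : T) (X : {set T}) : nat :=
  rk M (e |: X) - rk M [set e].
Definition kappa_contr (M : matroid T) (e : T) (S U : {set T}) :=
  kappa_on [set~ e] (contr_rk M e) S U.

Definition cl (M : matroid T) (X : {set T}) : {set T} :=
  [set x | rk M (x |: X) == rk M X].
End Conn.

(* Main.v *)
Require Import Defs.
From mathcomp Require Import all_boot.
From mathcomp Require Import zify.
Set Implicit Arguments. Unset Strict Implicit. Unset Printing Implicit Defensive.

Section H.
Variable T : finType.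

Lemma bigmin_le (I : eqType) (s : seq I) (P : pred I) (F : I -> nat) x j :
  j \in s -> P j -> \big[minn/x]_(i <- s | P i) F i <= F j.
Proof.
elim: s => // a s IH; rewrite inE big_cons => /predU1P[->|js] Pj.
  by rewrite Pj geq_minl.
case: (P a); last by apply: IH.
by rewrite (leq_trans (geq_minr _ _)) //; apply: IH.
Qed.

Lemma kappa_on_le (E : {set T}) r (S U Z : {set T}) :
  S \subset Z -> Z \subset E :\: U -> kappa_on E r S U <= lam_on E r Z.
Proof.
move=> h1 h2; rewrite /kappa_on; apply: bigmin_le; first exact: mem_index_enum.
by rewrite h1 h2.
Qed.

Lemma kappa_on_ge (E : {set T}) r (S U : {set T}) k :
  k <= r E -> (forall Z : {set T}, S \subset Z -> Z \subset E :\: U -> k <= lam_on E r Z) ->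
  k <= kappa_on E r S U.
Proof.
move=> h0 h; rewrite /kappa_on; apply: (big_ind (fun x => k <= x)) => //.
  by move=> x y; rewrite leq_min => -> ->.
by move=> Z /andP[]; apply: h.
Qed.

Variable M : matroid T.
Notation r := (rk M).

Lemma r0 : r set0 = 0.
Proof. by apply/eqP; rewrite -leqn0 -(cards0 T) rk_card. Qed.

Lemma rsub X Y : r X + r Y >= r (X :|: Y).
Proof. have := rk_submod M X Y; lia. Qed.

Lemma rcompl X : r setT <= r X + r (~: X).
Proof. have := rk_submod M X (~: X); rewrite setUCr setICr r0; lia. Qed.

Lemma re1 e : r [set e] <= 1.
Proof. by rewrite -(cards1 e) rk_card. Qed.

End H.

Lemma L_hlamk (k rz rc rE : nat) : rE <= rz + rc -> k <= rz + rc - rE -> k + rE <= rz + rc.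
Proof. lia. Qed.
Lemma L_hA (k rA rc rE : nat) : rE <= rA + rc -> rA + rc - rE = k -> rA + rc = k + rE.
Proof. lia. Qed.
Lemma L_s1 (k rA rB rEB rE re : nat) : rA <= rE -> rEB <= rE -> re <= rA -> re <= rEB ->
  rEB <= rB + re -> rA + rB = k + rE -> (rA - re) + (rEB - re) - (rE - re) <= k.
Proof. lia. Qed.
Lemma L_s2 (k rA rEB rE re : nat) : rA <= rE -> rEB <= rE ->
  k <= (rA - re) + (rEB - re) - (rE - re) -> k <= rE - re.
Proof. lia. Qed.
Lemma L_key (k rE re rX rY reX rnX : nat) :
  (reX - re) + (rnX - re) - (rE - re) < k ->
  k + rE <= rX + rnX -> k + rE <= reX + rY -> re <= 1 -> reX <= rX + re ->
  rX <= reX -> rY <= rnX -> rnX <= rY + re -> re <= reX -> re <= rnX ->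
  rE + re <= reX + rnX -> reX <= rE -> rnX <= rE ->
  [/\ reX = rX, rnX = rY & rX + rY = k + rE].
Proof. by move=> *; split; lia. Qed.
Lemma L_2 (k rE rA rnA rP rY rI rIc rU rUc : nat) :
  rU + rI <= rA + rP -> rIc + rUc <= rnA + rY -> k + rE <= rI + rIc ->
  k + rE <= rU + rUc -> rA + rnA = k + rE -> rP + rY = k + rE ->
  rI + rIc - rE = k.
Proof. lia. Qed.
Lemma L_3 (a b c : nat) : a + b <= c + b -> a <= c.
Proof. lia. Qed.
Lemma L_4 (k rE rA rAe rnA reB : nat) : k + rE <= rAe + reB -> rAe <= rA ->
  reB <= rnA -> rA + rnA = k + rE -> rA = rAe.
Proof. lia. Qed.

Theorem lemma3p5 (T : finType) (M : matroid T) (S U : {set T}) (e : T)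
  (hSU : [disjoint S & U])
  (he : e \notin S :|: U)
  (hcon : kappa_contr M e S U <> kappa M S U)
  (A B : {set T})
  (hpart : A :|: B = [set: T]) (hdisj : [disjoint A & B])
  (hSA : S \subset A) (hUB : U \subset B)
  (hlam : lambda M A = kappa M S U) (heA : e \in A)
  (hmin : forall A' B' : {set T}, A' :|: B' = [set: T] -> [disjoint A' & B'] ->
     S \subset A' -> U \subset B' -> lambda M A' = kappa M S U -> e \in A' ->
     #|A| <= #|A'|) :
  e \in cl M (A :\ e) :&: cl M B.
Proof.
have hB : B = ~: A.
  apply/setP => x; rewrite inE; have := hdisj; rewrite -setI_eq0 => /eqP/setP/(_ x).
  move/setP: (hpart) => /(_ x); rewrite !inE; by case: (x \in A); case: (x \in B).
subst B.
have hlamk : forall Z : {set T}, S \subset Z -> [disjoint Z & U] ->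
    kappa M S U + rk M setT <= rk M Z + rk M (~: Z).
  move=> Z h1 h2; have h3 : Z \subset setT :\: U by rewrite setTD -disjoints_subset.
  have := kappa_on_le (rk M) h1 h3.
  rewrite /lam_on setTD -/(kappa M S U); exact: L_hlamk (rcompl M Z).
have hA : rk M A + rk M (~: A) = kappa M S U + rk M setT.
  have := hlam; rewrite /lambda /lam_on setTD; exact: L_hA (rcompl M A).
move: he; rewrite inE negb_or => /andP[heS heU].
have pSA : forall x, x \in S -> x \in A by apply/subsetP.
have pUA : forall x, x \in U -> x \notin A.
  by move=> x /(subsetP hUB); rewrite inE.
have mono := rk_mono M.
have hre : rk M [set e] <= rk M setT by apply: mono; apply: subsetT.
have [X [hSX hXU heX hlt]] : exists X : {set T}, [/\ S \subset X, [disjoint X & U], e \notin X &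
   lam_on [set~ e] (contr_rk M e) X < kappa M S U].
  case: (boolP [exists X : {set T}, [&& S \subset X, X \subset [set~ e] :\: U &
      lam_on [set~ e] (contr_rk M e) X < kappa M S U]]).
    move=> /existsP[X /and3P[h1 h2 h3]]; exists X; split => //.
      rewrite disjoints_subset; apply/subsetP => x /(subsetP h2); rewrite !inE.
      by case/andP.
    by apply/negP => /(subsetP h2); rewrite !inE eqxx andbF.
  rewrite negb_exists => /forallP hall; exfalso; apply: hcon.
  have eA : e |: (A :\ e) = A by rewrite setD1K.
  have eB : e |: ([set~ e] :\: (A :\ e)) = e |: ~: A.
    by apply/setP => x; rewrite !inE; case: (x == e); rewrite /= ?andbT.
  have eT : e |: [set~ e] = setT.
    by apply/setP => x; rewrite !inE; case: (x == e).
  have hA1 : rk M A <= rk M setT by apply: mono; apply: subsetT.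
  have hA2 : rk M (e |: ~: A) <= rk M setT by apply: mono; apply: subsetT.
  have hA3 : rk M [set e] <= rk M A by apply: mono; rewrite sub1set.
  have hA4 : rk M [set e] <= rk M (e |: ~: A) by apply: mono; rewrite sub1set setU11.
  have hA5 : rk M (e |: ~: A) <= rk M (~: A) + rk M [set e].
    by rewrite addnC; apply: rsub.
  have hS1 : S \subset A :\ e.
    apply/subsetP => x hx; rewrite !inE pSA // andbT.
    by apply/negP => /eqP ?; subst x; rewrite hx in heS.
  have hS2 : A :\ e \subset [set~ e] :\: U.
    apply/subsetP => x; rewrite !inE => /andP[-> hx] /=.
    rewrite ?andbT; apply/negP => hU; move: (pUA _ hU); by rewrite hx.
  have hle := kappa_on_le (contr_rk M e) hS1 hS2.
  move: hle; rewrite /lam_on /contr_rk eA eB eT => hle.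
  apply/eqP; rewrite eqn_leq; apply/andP; split.
    rewrite /kappa_contr; apply: (leq_trans hle); exact: L_s1 hA1 hA2 hA3 hA4 hA5 hA.
  rewrite /kappa_contr; apply: kappa_on_ge.
    have := hall (A :\ e); rewrite hS1 hS2 /= -leqNgt /lam_on /contr_rk eA eB eT.
    exact: L_s2 hA1 hA2.
  move=> Z h1 h2; have := hall Z; rewrite h1 h2 /= -leqNgt; exact.
have pSX : forall x, x \in S -> x \in X by apply/subsetP.
have pXU : forall x, x \in X -> x \notin U.
  by move=> x; move: hXU; rewrite disjoints_subset => /subsetP h /h; rewrite inE.
set Y := [set~ e] :\: X.
have eY : e |: Y = ~: X.
  apply/setP => x; rewrite !inE; case: (x =P e) => [->|/eqP hxe] /=; first by rewrite heX.
  by rewrite andbT.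
have cP : ~: (e |: X) = Y.
  by apply/setP => x; rewrite !inE negb_or andbC.
have eT : e |: [set~ e] = setT.
  by apply/setP => x; rewrite !inE; case: (x == e).
move: hlt; rewrite /lam_on /contr_rk -/Y eY eT => hlt.
have f1 := hlamk X hSX hXU.
have hSP : S \subset e |: X.
  by apply/subsetP => x hx; rewrite !inE pSX ?orbT.
have hPU : [disjoint e |: X & U].
  rewrite disjoints_subset; apply/subsetP => x; rewrite !inE.
  case/orP => [/eqP->|hx] //; exact: pXU.
have f2 := hlamk (e |: X) hSP hPU; rewrite cP in f2.
have f3 := re1 M e.
have f4 : rk M (e |: X) <= rk M X + rk M [set e] by rewrite addnC; apply: rsub.
have f5 : rk M X <= rk M (e |: X) by apply: mono; apply: subsetU1.
have f6 : rk M Y <= rk M (~: X) by apply: mono; rewrite -eY; apply: subsetU1.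
have f7 : rk M (~: X) <= rk M Y + rk M [set e] by rewrite -eY addnC; apply: rsub.
have f8 : rk M [set e] <= rk M (e |: X) by apply: mono; rewrite sub1set setU11.
have f8' : rk M [set e] <= rk M (~: X) by apply: mono; rewrite -eY sub1set setU11.
have f9 : rk M setT + rk M [set e] <= rk M (e |: X) + rk M (~: X).
  have := rk_submod M (e |: X) (~: X).
  have -> : (e |: X) :|: ~: X = setT.
    by apply/setP => x; rewrite !inE; case: (x == e); case: (x \in X).
  have -> : (e |: X) :&: ~: X = [set e].
    apply/setP => x; rewrite !inE; case: (boolP (x == e)) => [/eqP->|hxe] /=.
      by rewrite (negbTE heX).
    by case: (x \in X).
  exact.
have f10 : rk M (e |: X) <= rk M setT by apply: mono; apply: subsetT.
have f11 : rk M (~: X) <= rk M setT by apply: mono; apply: subsetT.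
have [kX kY key] := L_key hlt f1 f2 f3 f4 f5 f6 f7 f8 f8' f9 f10 f11.
have s1 := rk_submod M A (e |: X).
have s2 := rk_submod M (~: A) Y.
have hS3 : S \subset A :&: (e |: X).
  by apply/subsetP => x hx; rewrite !inE pSA // pSX ?orbT.
have hD3 : [disjoint A :&: (e |: X) & U].
  rewrite disjoints_subset; apply/subsetP => x; rewrite !inE => /andP[hx _].
  by apply/negP => hU; move: (pUA _ hU); rewrite hx.
have hS4 : S \subset A :|: (e |: X).
  by apply/subsetP => x hx; rewrite !inE pSA.
have hD4 : [disjoint A :|: (e |: X) & U].
  rewrite disjoints_subset; apply/subsetP => x; rewrite !inE.
  case/orP => [hx|/orP[/eqP->|hx]] //.
    by apply/negP => hU; move: (pUA _ hU); rewrite hx.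
  by apply: pXU.
have g1 := hlamk _ hS3 hD3; rewrite setCI cP in g1.
have g2 := hlamk _ hS4 hD4; rewrite setCU cP in g2.
have hl3 : lambda M (A :&: (e |: X)) = kappa M S U.
  rewrite /lambda /lam_on setTD setCI cP.
  by apply: L_2 s1 s2 g1 g2 hA _; rewrite kX.
have hc := hmin (A :&: (e |: X)) (~: (A :&: (e |: X))) (setUCr _)
  (_ : [disjoint _ & _]) hS3 (_ : U \subset _) hl3 (_ : e \in _).
have hAP : A \subset e |: X.
  apply/setIidPl/eqP; rewrite eqEcard subsetIl hc //.
  - by rewrite disjoints_subset setCK.
  - by rewrite -disjoints_subset disjoint_sym.
  - by rewrite !inE heA eqxx.
have pAX : forall x, x \in A -> x != e -> x \in X.
  move=> x /(subsetP hAP); rewrite !inE => /orP[->|] //.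
have hB1 : rk M (e |: ~: A) <= rk M (~: A).
  have := rk_submod M (~: A) (e |: Y).
  have -> : ~: A :|: (e |: Y) = e |: ~: A.
    apply/setP => x; rewrite !inE; case: (boolP (x == e)) => [/eqP->|hxe] /=.
      by rewrite orbT.
    case: (boolP (x \in A)) => hxA //=.
    by rewrite (pAX _ hxA hxe).
  have -> : ~: A :&: (e |: Y) = Y.
    apply/setP => x; rewrite !inE; case: (boolP (x == e)) => [/eqP->|hxe] /=.
      by rewrite heA /= andbF.
    case: (boolP (x \in A)) => hxA //=.
    by rewrite (pAX _ hxA hxe).
  rewrite eY kY; exact: L_3.
have hS1 : S \subset A :\ e.
  apply/subsetP => x hx; rewrite !inE pSA // andbT.
  by apply/negP => /eqP ?; subst x; rewrite hx in heS.
have hD1 : [disjoint A :\ e & U].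
  rewrite disjoints_subset; apply/subsetP => x; rewrite !inE => /andP[_ hx].
  by apply/negP => hU; move: (pUA _ hU); rewrite hx.
have g3 := hlamk _ hS1 hD1.
have eAc : ~: (A :\ e) = e |: ~: A.
  by apply/setP => x; rewrite !inE negb_and negbK.
rewrite eAc in g3.
have m1 : rk M (A :\ e) <= rk M A by apply: mono; apply: subD1set.
have m2 : rk M (~: A) <= rk M (e |: ~: A) by apply: mono; apply: subsetU1.
rewrite inE; apply/andP; split; rewrite /cl inE; apply/eqP.
  rewrite setD1K //; exact: L_4 g3 m1 hB1 hA.
by apply/eqP; rewrite eqn_leq hB1 m2.
Qed.
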